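(* Let $G_*$ be an operadic crossed simplicial group and let $\Gamma_n=G_n/\!\!/P_n$ be its action groupoids. For $n,m\ge0$ and $0\le i\le n$ define $\circ_i\colon\Gamma_n\times\Gamma_m\to\Gamma_{n+m}$ by $$[\sigma,f]\circ_i[\tau,g]=[\sigma\circ_i\tau,\,(f^{-1}\circ_{\sigma^{-1}(i)}g^{-1})^{-1}],$$ where $\sigma\circ_i\tau$ is the set-operad composition on $S_*$ and $f^{-1}\circ_{\sigma^{-1}(i)}g^{-1}$ is the set-operad composition on $G_*$ (both described in the context). Then each $\circ_i$ is a functor of groupoids, and the sequence of groupoids $\{\Gamma_n\}_{n\ge0}$ with the operations $\circ_i$ and the simplicial face maps $d_j$ of $\Gamma_*$ forms a shifted operad in $\textsf{Gpd}$.
   Context: A crossed simplicial group $G_*$: groups $G_n$ ($n\ge0$) with a left action of $G_n$ on $[n]=\{0,\dots,n\}$ and maps $d_i,s_i$ forming a simplicial set with $d_i(gh)=d_i(g)d_{g^{-1}(i)}(h)$, $s_i(gh)=s_i(g)s_{g^{-1}(i)}(h)$. By the Fiedorowicz–Loday structure theorem there is a canonical short exact sequence $1\to P_*\to G_*\xrightarrow{\pi}N_*\to1$ with $P_*$ a simplicial group acting trivially on each $[n]$. $G_*$ is symmetric if $N_*=S_*$, the symmetric crossed simplicial group with $S_n=\mathrm{Bij}([n])$. On $S_*$ let $s_L(\sigma)=(0,\sigma(0)+1,\dots,\sigma(n)+1)$ and $s_R(\sigma)=(\sigma(0),\dots,\sigma(n),n+1)$ (adding a fixed point on the left, resp. right).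 A symmetric crossed simplicial group is ambi contractible if equipped with a left contraction (extra degeneracy) $s_L=s_{-1}\colon G_n\to G_{n+1}$ and right contraction $s_R=s_{n+1}\colon G_n\to G_{n+1}$, both group homomorphisms compatible with $s_L,s_R$ on $S_*$ via $\pi$. It is monoidal if $(\alpha,\beta)\mapsto s_R^{m+1}(\alpha)\cdot s_L^{n+1}(\beta)$, $G_n\times G_m\to G_{n+m+1}$, is a group homomorphism. Notation: for $\beta\in G_m$ and $a,b\ge0$, $1_a\boxplus\beta\boxplus1_b:=s_L^a(s_R^b(\beta))\in G_{m+a+b}$. A monoidal crossed simplicial group is operadic if for all $\alpha\in G_n$, $\beta\in G_m$, $0\le i\le n$: $(1_i\boxplus\beta\boxplus1_{n-i})\cdot s_i^m(\alpha)=s_i^m(\alpha)\cdot(1_{\alpha^{-1}(i)}\boxplus\beta\boxplus1_{n-\alpha^{-1}(i)})$, where $s_i^m$ is the $m$-fold iterate of $s_i$. The set-operad composition on $G_*$ (and likewise on $S_*$, which is itself operadic) is $\alpha\circ_i\beta=(1_i\boxplus\beta\boxplus1_{n-i})\cdot s_i^m(\alpha)\in G_{n+m}$ for $\alpha\in G_n,\beta\in G_m$, $0\le i\le n$. The action groupoid $\Gamma_n=G_n/\!\!/P_n$ has objects $\sigma\in G_n/P_n\cong S_n$ and morphisms $[\sigma,f]\colon\sigma\to\sigma\pi(f)^{-1}$ for $f\in G_n$, composed by $[\sigma\pi(f)^{-1},g]\cdot[\sigma,f]=[\sigma,gf]$; its face maps are $d_j[\sigma,f]=[d_j\sigma,d_{\sigma^{-1}(j)}(f^{-1})^{-1}]$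 (with $d_j\sigma$ in $S_*$, $\sigma^{-1}(j)$ the inverse permutation applied to $j$, and the outer $d$ that of $G_*$). A shifted operad in $\textsf{Gpd}$ (with cartesian product) is a semi-simplicial groupoid $\mathcal{U}( * )$ (faces $d_i\colon\mathcal{U}(n)\to\mathcal{U}(n-1)$) with functors $\circ_i\colon\mathcal{U}(n)\times\mathcal{U}(m)\to\mathcal{U}(n+m)$, $0\le i\le n$, such that: there is $\mathrm{id}\in\mathcal{U}(0)$ with $\mathrm{id}\circ_0\nu=\nu$, $\mu\circ_i\mathrm{id}=\mu$; $(\lambda\circ_i\mu)\circ_{i+j}\nu=\lambda\circ_i(\mu\circ_j\nu)$ ($\lambda\in\mathcal{U}(l),\mu\in\mathcal{U}(m),\nu\in\mathcal{U}(n)$, $0\le i\le l$, $0\le j\le m$); $(\lambda\circ_i\mu)\circ_{k+m}\nu=(\lambda\circ_k\nu)\circ_i\mu$ for $0\le i<k\le l$; $d_{i+j}(\lambda\circ_i\mu)=\lambda\circ_id_j(\mu)$; and for $0\le i<k\le l$, $d_i(\lambda\circ_k\nu)=d_i(\lambda)\circ_{k-1}\nu$ and $d_{k+m}(\lambda\circ_i\mu)=d_k(\lambda)\circ_i\mu$. *)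

(* Defs.v *)
From mathcomp Require Import all_boot fingroup perm.
Set Implicit Arguments. Unset Strict Implicit. Unset Printing Implicit Defensive.

Definition cast (X : nat -> Type) (a b : nat) (e : a = b) (x : X a) : X b :=
  eq_rect a X x b e.
Arguments cast X {a b} e x.

Fixpoint iterL (X : nat -> Type) (sl : forall k, X k -> X k.+1) (a n : nat)
  (x : X n) {struct a} : X (a + n) :=
  match a return X (a + n) with
  | 0 => x
  | a'.+1 => sl (a' + n) (iterL sl a' x)
  end.

Fixpoint iterD (X : nat -> Type) (s : forall k, nat -> X k -> X k.+1) (i m n : nat)
  (x : X n) {struct m} : X (m + n) :=
  match m return X (m + n) with
  | 0 => x
  | m'.+1 => s (m' + n) i (iterD s i m' x)
  end.

Lemma blk_eq (n m : nat) (i : 'I_n.+1) : i + (n - i + m) = n + m.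
Proof. by rewrite addnA subnKC // -ltnS. Qed.

(* 1_i [+] b [+] 1_{n-i} := s_L^i (s_R^{n-i} b), in X_{n+m} *)
Definition blk (X : nat -> Type) (sl sr : forall k, X k -> X k.+1)
  (n m : nat) (i : 'I_n.+1) (b : X m) : X (n + m) :=
  cast X (blk_eq m i) (iterL sl i (iterL sr (n - i) b)).

(* set-operad composition  a o_i b = (1_i [+] b [+] 1_{n-i}) . s_i^m(a) *)
Definition ocomp (X : nat -> Type) (sl sr : forall k, X k -> X k.+1)
  (s : forall k, nat -> X k -> X k.+1) (mul : forall k, X k -> X k -> X k)
  (n m : nat) (a : X n) (b : X m) (i : 'I_n.+1) : X (n + m) :=
  mul (n + m) (blk sl sr i b) (cast X (addnC m n) (iterD s i m a)).

(* The symmetric crossed simplicial group S_*, S_n = Bij([n]).                *)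
(* Group law written so that (smul s t) x = s (t x) (composition, left action).*)
Definition Sn (n : nat) := {perm 'I_n.+1}.

Definition smul (n : nat) (s t : Sn n) : Sn n := (t * s)%g.

(* face map: d_i(s) deletes s^{-1}(i) from the source and i from the target *)
Definition dfun n (s : {perm 'I_n.+2}) (k ii : 'I_n.+2) (x : 'I_n.+1) : 'I_n.+1 :=
  odflt x (unlift ii (s (lift k x))).

Lemma dfunK n (s : {perm 'I_n.+2}) (ii : 'I_n.+2) :
  cancel (dfun s (s^-1 ii)%g ii) (dfun s^-1 ii (s^-1 ii))%g.
Proof.
move=> x; rewrite /dfun.
have hne : ii != s (lift (s^-1 ii)%g x).
  by apply/eqP => h; have := neq_lift (s^-1 ii)%g x; rewrite {1}h permK eqxx.
case: (unlift_some hne) => y hy ->; rewrite /= -hy permK.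
by rewrite liftK.
Qed.

Definition sface (n i : nat) (s : Sn n.+1) : Sn n :=
  perm (can_inj (dfunK s (inord i))).

(* degeneracy s_i(s): doubles s^{-1}(i) in the source and i in the target *)
Definition sdeg (n i : nat) (s : Sn n) : Sn n.+1 :=
  lift_perm (lift ord0 (s^-1 (inord i))%g) (lift ord0 (inord i)) s.

Definition sL (n : nat) (s : Sn n) : Sn n.+1 := lift_perm ord0 ord0 s.
Definition sR (n : nat) (s : Sn n) : Sn n.+1 := lift_perm ord_max ord_max s.

Definition socomp (n m : nat) (s : Sn n) (t : Sn m) (i : 'I_n.+1) : Sn (n + m) :=
  ocomp sL sR sdeg smul s t i.

(* Faces d_i : G_{n+1} -> G_n are indexed by i in [n+1], degeneracies         *)
(* s_i : G_n -> G_{n+1} by i in [n]; the elements of [n] are 'I_n.+1.          *)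
Local Unset Implicit Arguments.
Record CSG := {
  G :> nat -> Type;
  gmul : forall n, G n -> G n -> G n;
  gone : forall n, G n;
  ginv : forall n, G n -> G n;
  gmulA : forall n x y z, gmul n x (gmul n y z) = gmul n (gmul n x y) z;
  gmul1 : forall n x, gmul n (gone n) x = x;
  gmulV : forall n x, gmul n (ginv n x) x = gone n;
  gact : forall n, G n -> 'I_n.+1 -> 'I_n.+1;
  gact1 : forall n x, gact n (gone n) x = x;
  gactM : forall n g h x, gact n (gmul n g h) x = gact n g (gact n h x);
  gface : forall n, nat -> G n.+1 -> G n;
  gdeg : forall n, nat -> G n -> G n.+1;
  gface_face : forall n (i j : nat) (x : G n.+2), i < j -> j <= n.+2 ->
    gface n i (gface n.+1 j x) = gface n j.-1 (gface n.+1 i x);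
  gface_deg_lt : forall n (i j : nat) (x : G n.+1), i < j -> j <= n.+1 ->
    gface n.+1 i (gdeg n.+1 j x) = gdeg n j.-1 (gface n i x);
  gface_deg_eq : forall n (j : nat) (x : G n), j <= n ->
    gface n j (gdeg n j x) = x /\ gface n j.+1 (gdeg n j x) = x;
  gface_deg_gt : forall n (i j : nat) (x : G n.+1), j.+1 < i -> i <= n.+2 ->
    gface n.+1 i (gdeg n.+1 j x) = gdeg n j (gface n i.-1 x);
  gdeg_deg : forall n (i j : nat) (x : G n), i <= j -> j <= n ->
    gdeg n.+1 i (gdeg n j x) = gdeg n.+1 j.+1 (gdeg n i x);
  gface_mul : forall n (i : 'I_n.+2) (g h : G n.+1),
    gface n i (gmul n.+1 g h) = gmul n (gface n i g) (gface n (gact n.+1 (ginv n.+1 g) i) h);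
  gdeg_mul : forall n (i : 'I_n.+1) (g h : G n),
    gdeg n i (gmul n g h) = gmul n.+1 (gdeg n i g) (gdeg n (gact n (ginv n g) i) h);
  (* left and right contraction maps s_L = s_{-1}, s_R = s_{n+1} (data) *)
  gsL : forall n, G n -> G n.+1;
  gsR : forall n, G n -> G n.+1
}.
Local Set Implicit Arguments.
Arguments gmul {c} n _ _.
Arguments gone c n.
Arguments ginv {c} n _.
Arguments gact {c n} _ _.
Arguments gface {c} n _ _.
Arguments gdeg {c} n _ _.
Arguments gsL {c n} _.
Arguments gsR {c n} _.

Lemma gact_inj (C : CSG) (n : nat) (g : C n) : injective (gact g).
Proof.
move=> x y H.
by rewrite -[x](gact1 C) -(gmulV C n g) gactM H -gactM gmulV gact1.
Qed.

Definition gpi (C : CSG) (n : nat) (g : C n) : Sn n := perm (@gact_inj C n g).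

Definition is_symmetric (C : CSG) : Prop :=
  (forall n (s : Sn n), exists g : C n, gpi g = s) /\
  (forall n (i : nat) (g : C n.+1), i <= n.+1 -> gpi (gface n i g) = sface i (gpi g)) /\
  (forall n (i : nat) (g : C n), i <= n -> gpi (gdeg n i g) = sdeg i (gpi g)).

(* ambi contractible: s_L = s_{-1} and s_R = s_{n+1} are extra degeneracies   *)
(* (satisfying the simplicial identities with index -1, resp. n+1), group     *)
Definition is_ambi_contractible (C : CSG) : Prop :=
  (forall n (g h : C n), gsL (gmul n g h) = gmul n.+1 (gsL g) (gsL h)) /\
  (forall n (g h : C n), gsR (gmul n g h) = gmul n.+1 (gsR g) (gsR h)) /\
  (forall n (x : C n), gface n 0 (gsL x) = x) /\
  (forall n (i : nat) (x : C n.+1), i <= n.+1 ->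
      gface n.+1 i.+1 (gsL x) = gsL (gface n i x)) /\
  (forall n (x : C n), gdeg n.+1 0 (gsL x) = gsL (gsL x)) /\
  (forall n (j : nat) (x : C n), j <= n ->
      gdeg n.+1 j.+1 (gsL x) = gsL (gdeg n j x)) /\
  (forall n (x : C n), gface n n.+1 (gsR x) = x) /\
  (forall n (i : nat) (x : C n.+1), i <= n.+1 ->
      gface n.+1 i (gsR x) = gsR (gface n i x)) /\
  (forall n (x : C n), gdeg n.+1 n.+1 (gsR x) = gsR (gsR x)) /\
  (forall n (j : nat) (x : C n), j <= n ->
      gdeg n.+1 j (gsR x) = gsR (gdeg n j x)) /\
  (forall n (g : C n), gpi (gsL g) = sL (gpi g)) /\
  (forall n (g : C n), gpi (gsR g) = sR (gpi g)).

Lemma mon_eq (n m : nat) : m.+1 + n = (n + m).+1.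
Proof. by rewrite addSn addnC. Qed.

Definition gmon (C : CSG) (n m : nat) (a : C n) (b : C m) : C (n + m).+1 :=
  gmul (n + m).+1 (cast C (mon_eq n m) (iterL (@gsR C) m.+1 a))
                  (iterL (@gsL C) n.+1 b : C (n + m).+1).

Definition is_monoidal (C : CSG) : Prop :=
  forall n m (a a' : C n) (b b' : C m),
    gmon (gmul n a a') (gmul m b b') = gmul (n + m).+1 (gmon a b) (gmon a' b').

Definition gblk (C : CSG) (n m : nat) (i : 'I_n.+1) (b : C m) : C (n + m) :=
  blk (@gsL C) (@gsR C) i b.

Definition gdegit (C : CSG) (n m : nat) (i : nat) (a : C n) : C (n + m) :=
  cast C (addnC m n) (iterD (@gdeg C) i m a).

Definition is_operadic (C : CSG) : Prop :=
  forall n m (a : C n) (b : C m) (i : 'I_n.+1),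
    gmul (n + m) (gblk i b) (gdegit m i a)
    = gmul (n + m) (gdegit m i a) (gblk (gact (ginv n a) i) b).

Definition gocomp (C : CSG) (n m : nat) (a : C n) (b : C m) (i : 'I_n.+1) : C (n + m) :=
  ocomp (@gsL C) (@gsR C) (@gdeg C) (@gmul C) a b i.

(* comp g f is "g after f" (defined when tgt f = src g).                      *)
Record SOpData := {
  Ob : nat -> Type;
  Mor : nat -> Type;
  src : forall n, Mor n -> Ob n;
  tgt : forall n, Mor n -> Ob n;
  idm : forall n, Ob n -> Mor n;
  comp : forall n, Mor n -> Mor n -> Mor n;
  dOb : forall n, nat -> Ob n.+1 -> Ob n;
  dMor : forall n, nat -> Mor n.+1 -> Mor n;
  cOb : forall n m, nat -> Ob n -> Ob m -> Ob (n + m);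
  cMor : forall n m, nat -> Mor n -> Mor m -> Mor (n + m)
}.

Definition is_groupoid (U : SOpData) (n : nat) : Prop :=
  (forall x : Ob U n, src (idm x) = x /\ tgt (idm x) = x) /\
  (forall f g : Mor U n, tgt f = src g ->
     src (comp g f) = src f /\ tgt (comp g f) = tgt g) /\
  (forall f : Mor U n, comp f (idm (src f)) = f /\ comp (idm (tgt f)) f = f) /\
  (forall f g h : Mor U n, tgt f = src g -> tgt g = src h ->
     comp h (comp g f) = comp (comp h g) f) /\
  (forall f : Mor U n, exists g : Mor U n,
     src g = tgt f /\ tgt g = src f /\
     comp g f = idm (src f) /\ comp f g = idm (tgt f)).

Definition is_functor (U : SOpData) (a b : nat)
  (Fo : Ob U a -> Ob U b) (Fm : Mor U a -> Mor U b) : Prop :=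
  (forall f, src (Fm f) = Fo (src f)) /\
  (forall f, tgt (Fm f) = Fo (tgt f)) /\
  (forall x, Fm (idm x) = idm (Fo x)) /\
  (forall f g, tgt f = src g -> Fm (comp g f) = comp (Fm g) (Fm f)).

Definition is_bifunctor (U : SOpData) (a b c : nat)
  (Fo : Ob U a -> Ob U b -> Ob U c) (Fm : Mor U a -> Mor U b -> Mor U c) : Prop :=
  (forall f g, src (Fm f g) = Fo (src f) (src g)) /\
  (forall f g, tgt (Fm f g) = Fo (tgt f) (tgt g)) /\
  (forall x y, Fm (idm x) (idm y) = idm (Fo x y)) /\
  (forall f f' g g', tgt f = src f' -> tgt g = src g' ->
     Fm (comp f' f) (comp g' g) = comp (Fm f' g') (Fm f g)).

Definition semisimplicial (X : nat -> Type) (d : forall n, nat -> X n.+1 -> X n) : Prop :=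
  forall n (i j : nat) (x : X n.+2), i < j -> j <= n.+2 ->
    d n i (d n.+1 j x) = d n j.-1 (d n.+1 i x).

Definition operad_laws (X : nat -> Type) (d : forall n, nat -> X n.+1 -> X n)
  (c : forall n m, nat -> X n -> X m -> X (n + m)) (e : X 0) : Prop :=
  (forall n (v : X n), c 0 n 0 e v = v) /\
  (forall n (u : X n) (i : nat), i <= n -> cast X (addn0 n) (c n 0 i u e) = u) /\
  (forall l m n (x : X l) (y : X m) (z : X n) (i j : nat), i <= l -> j <= m ->
     cast X (addnA l m n) (c l (m + n) i x (c m n j y z)) = c (l + m) n (i + j) (c l m i x y) z) /\
  (forall l m n (x : X l) (y : X m) (z : X n) (i k : nat), i < k -> k <= l ->
     cast X (addnAC l m n) (c (l + m) n (k + m) (c l m i x y) z) = c (l + n) m i (c l n k x z) y) /\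
  (forall l m (x : X l) (y : X m.+1) (i j : nat), i <= l -> j <= m.+1 ->
     d (l + m) (i + j) (cast X (addnS l m) (c l m.+1 i x y)) = c l m i x (d m j y)) /\
  (forall l n (x : X l.+1) (z : X n) (i k : nat), i < k -> k <= l.+1 ->
     d (l + n) i (cast X (addSn l n) (c l.+1 n k x z)) = c l n k.-1 (d l i x) z) /\
  (forall l m (x : X l.+1) (y : X m) (i k : nat), i < k -> k <= l.+1 ->
     d (l + m) (k + m) (cast X (addSn l m) (c l.+1 m i x y)) = c l m i (d l k x) y).

Definition is_shifted_operad (U : SOpData) : Prop :=
  (forall n, is_groupoid U n) /\
  (forall n (i : nat), i <= n.+1 -> is_functor (@dOb U n i) (@dMor U n i)) /\
  semisimplicial (@dOb U) /\ semisimplicial (@dMor U) /\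
  (forall n m (i : nat), i <= n -> is_bifunctor (@cOb U n m i) (@cMor U n m i)) /\
  exists e : Ob U 0,
    operad_laws (@dOb U) (@cOb U) e /\ operad_laws (@dMor U) (@cMor U) (idm e).

(* The action groupoids Gamma_n = G_n // P_n: objects sigma in S_n,          *)
(* morphisms [sigma, f] : sigma -> sigma pi(f)^{-1}, f in G_n.               *)
Definition GaMor (C : CSG) (n : nat) := (Sn n * C n)%type.

Definition Gamma (C : CSG) : SOpData := {|
  Ob := Sn;
  Mor := GaMor C;
  src := fun n p => p.1;
  tgt := fun n p => smul p.1 (gpi p.2)^-1%g;
  idm := fun n s => (s, gone C n);
  comp := fun n q p => (p.1, gmul n q.2 p.2);
  dOb := fun n j s => sface j s;
  dMor := fun n j p =>
    (sface j p.1, ginv n (gface n (p.1^-1 (inord j))%g (ginv n.+1 p.2)));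
  cOb := fun n m i s t => socomp s t (inord i);
  cMor := fun n m i p q =>
    (socomp p.1 q.1 (inord i),
     ginv (n + m) (gocomp (ginv n p.2) (ginv m q.2) (p.1^-1 (inord i))%g))
|}.

(* Main.v *)
Require Import Defs.
From mathcomp Require Import all_boot fingroup perm.
From mathcomp Require Import zify.
Set Implicit Arguments. Unset Strict Implicit. Unset Printing Implicit Defensive.

Section Basic.
Variable C : CSG.
Implicit Types n m : nat.

Lemma mulgVr n (x : C n) : gmul n x (ginv n x) = gone C n.
Proof.
rewrite -[LHS](gmul1 C) -(gmulV C n (ginv n x)) -gmulA.
by rewrite (gmulA C n (ginv n x) x) (gmulV C) (gmul1 C) (gmulV C).
Qed.

Lemma mulg1r n (x : C n) : gmul n x (gone C n) = x.
Proof. by rewrite -(gmulV C n x) gmulA mulgVr gmul1. Qed.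

Lemma mulg_can n (x y z : C n) : gmul n x y = gmul n x z -> y = z.
Proof.
move=> h; rewrite -(gmul1 C n y) -(gmul1 C n z) -(gmulV C n x) -!gmulA.
by rewrite h.
Qed.

Lemma ginvK n (x : C n) : ginv n (ginv n x) = x.
Proof. by apply: (@mulg_can n (ginv n x)); rewrite mulgVr gmulV. Qed.

Lemma ginv_mul n (x y : C n) : ginv n (gmul n x y) = gmul n (ginv n y) (ginv n x).
Proof.
apply: (@mulg_can n (gmul n x y)); rewrite mulgVr.
by rewrite -gmulA (gmulA C n y) mulgVr gmul1 mulgVr.
Qed.

Lemma ginv1 n : ginv n (gone C n) = gone C n.
Proof. by rewrite -[LHS]mulg1r gmulV. Qed.

Lemma gone_uniq n (x : C n) : gmul n x x = x -> x = gone C n.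
Proof. by move=> h; apply: (@mulg_can n x); rewrite h mulg1r. Qed.

Lemma hom_one n m (f : C n -> C m) :
  (forall x y, f (gmul n x y) = gmul m (f x) (f y)) -> f (gone C n) = gone C m.
Proof. by move=> h; apply: gone_uniq; rewrite -h gmul1. Qed.

Lemma hom_inv n m (f : C n -> C m) :
  (forall x y, f (gmul n x y) = gmul m (f x) (f y)) -> forall x, f (ginv n x) = ginv m (f x).
Proof.
move=> h x; apply: (@mulg_can m (f x)); rewrite mulgVr -h mulgVr.
exact: hom_one.
Qed.

Lemma gact_inv n (g : C n) x : gact (ginv n g) (gact g x) = x.
Proof. by rewrite -gactM gmulV gact1. Qed.
Lemma gact_invr n (g : C n) x : gact g (gact (ginv n g) x) = x.
Proof. by rewrite -gactM mulgVr gact1. Qed.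

Lemma gpiE n (g : C n) x : gpi g x = gact g x.
Proof. by rewrite /gpi permE. Qed.

Lemma gpi_mul n (g h : C n) : gpi (gmul n g h) = smul (gpi g) (gpi h).
Proof. by apply/permP => x; rewrite /smul permM !gpiE gactM. Qed.

Lemma gpi_inv n (g : C n) : gpi (ginv n g) = ((gpi g)^-1)%g.
Proof.
apply/permP => x; rewrite gpiE; apply: (@gact_inj C n g).
by rewrite gact_invr -gpiE permKV.
Qed.

Lemma gpi_one n : gpi (gone C n) = 1%g.
Proof. by apply/permP => x; rewrite gpiE gact1 perm1. Qed.

Lemma gface_mulE n i (g h : C n.+1) : i <= n.+1 ->
  gface n i (gmul n.+1 g h) =
  gmul n (gface n i g) (gface n (gact (ginv n.+1 g) (inord i)) h).
Proof.
move=> hi; have := gface_mul C n (inord i) g h; rewrite inordK //.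
Qed.

Lemma gdeg_mulE n i (g h : C n) : i <= n ->
  gdeg n i (gmul n g h) =
  gmul n.+1 (gdeg n i g) (gdeg n (gact (ginv n g) (inord i)) h).
Proof.
move=> hi; have := gdeg_mul C n (inord i) g h; rewrite inordK //.
Qed.

End Basic.

Section Sig.
Variable C : CSG.

Definition T := {n : nat & C n}.
Definition mk n (x : C n) : T := existT _ n x.
Definition lv (p : T) := projT1 p.
Definition SL (p : T) : T := mk (gsL (projT2 p)).
Definition SR (p : T) : T := mk (gsR (projT2 p)).
Definition DG i (p : T) : T := mk (gdeg _ i (projT2 p)).
Definition INV (p : T) : T := mk (ginv _ (projT2 p)).
Definition ONE n : T := mk (gone C n).
Definition FC i (p : T) : T :=
  match p with existT n x =>
    match n return C n -> T with 0 => fun x => mk x | n'.+1 => fun x => mk (gface n' i x) end x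
  end.
Definition MUL (p q : T) : T :=
  match PeanoNat.Nat.eq_dec (projT1 q) (projT1 p) with
  | left e => mk (gmul _ (projT2 p) (cast C e (projT2 q)))
  | right _ => p end.
Definition ACT (p : T) k : nat := nat_of_ord (gact (projT2 p) (inord k)).

Lemma mk_inj n (x y : C n) : mk x = mk y -> x = y.
Proof. exact: Eqdep_dec.inj_pair2_eq_dec PeanoNat.Nat.eq_dec _ _ _ _. Qed.

Lemma mk_cast a b (e : a = b) (x : C a) : mk (cast C e x) = mk x.
Proof. by case: b / e. Qed.

Lemma cast_mk a b (e : a = b) (x : C a) (y : C b) : mk x = mk y -> cast C e x = y.
Proof. by move=> h; apply: mk_inj; rewrite mk_cast. Qed.

Lemma MUL_mk n (x y : C n) : MUL (mk x) (mk y) = mk (gmul n x y).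
Proof.
rewrite /MUL /=; case: PeanoNat.Nat.eq_dec => // e.
by rewrite (eq_irrelevance e erefl).
Qed.

Lemma lv_mk n (x : C n) : lv (mk x) = n. Proof. by []. Qed.

Lemma mk_iterL (f : forall k, C k -> C k.+1) a n (x : C n) :
  mk (iterL f a x) = iter a (fun p => mk (f _ (projT2 p))) (mk x).
Proof. by elim: a => //= a IH; rewrite -IH. Qed.

Lemma mk_iterD (f : forall k, nat -> C k -> C k.+1) i a n (x : C n) :
  mk (Defs.iterD f i a x) = iter a (fun p => mk (f _ i (projT2 p))) (mk x).
Proof. by elim: a => //= a IH; rewrite -IH. Qed.

Lemma Tcase (P : T -> Prop) : (forall n (x : C n), P (mk x)) -> forall p, P p.
Proof. by move=> h [n x]; exact: h. Qed.

End Sig.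


Ltac arith0 :=
  repeat (match goal with |- context [if ?b then _ else _] =>
    (match b with context [if _ then _ else _] => fail 1 | _ => case: (boolP b) => ? end) end);
  lia.

Definition bmp h k := if h <= k then k.+1 else k.
Definition ubmp h k := if h < k then k.-1 else k.

Section Main.
Variable C : CSG.
Hypothesis HS : is_symmetric C.
Hypothesis HA : is_ambi_contractible C.
Hypothesis HM : is_monoidal C.
Hypothesis HO : is_operadic C.

Notation T := (T C).
Notation mk := (@mk C _).
Notation ONE := (ONE C).
Notation SL := (@SL C).
Notation SR := (@SR C).
Notation DG := (@DG C).
Notation FC := (@FC C).
Notation INV := (@INV C).
Notation MUL := (@MUL C).
Notation ACT := (@ACT C).
Notation lv := (@lv C).

Ltac tc p := elim/Tcase: p => ? ?.
Ltac tsub := repeat match goal with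
  | e : ?a = ?b |- _ => subst a
  | e : ?a = ?b |- _ => subst b end.

Lemma lv_MUL (p q : T) : lv (MUL p q) = lv p.
Proof. by rewrite /MUL; case: PeanoNat.Nat.eq_dec. Qed.
Lemma lv_SL (p : T) : lv (SL p) = (lv p).+1. Proof. by []. Qed.
Lemma lv_SR (p : T) : lv (SR p) = (lv p).+1. Proof. by []. Qed.
Lemma lv_DG i (p : T) : lv (DG i p) = (lv p).+1. Proof. by []. Qed.
Lemma lv_INV (p : T) : lv (INV p) = lv p. Proof. by []. Qed.
Lemma lv_ONE n : lv (ONE n) = n. Proof. by []. Qed.
Lemma lv_FC i (p : T) : lv (FC i p) = (lv p).-1. Proof. by case: p => [[|n] x]. Qed.
Lemma lv_iterSL a (p : T) : lv (iter a SL p) = a + lv p.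
Proof. by elim: a => //= a IH; rewrite addSn -IH. Qed.
Lemma lv_iterSR a (p : T) : lv (iter a SR p) = a + lv p.
Proof. by elim: a => //= a IH; rewrite addSn -IH. Qed.
Lemma lv_iterDG i a (p : T) : lv (iter a (DG i) p) = a + lv p.
Proof. by elim: a => //= a IH; rewrite addSn -IH. Qed.

Lemma MULA (p q r : T) : lv q = lv p -> lv r = lv p ->
  MUL p (MUL q r) = MUL (MUL p q) r.
Proof. tc p; tc q; tc r => /= e1 e2; tsub; by rewrite !MUL_mk gmulA. Qed.
Lemma MUL1 (p : T) : MUL (ONE (lv p)) p = p.
Proof. by tc p; rewrite /= MUL_mk gmul1. Qed.
Lemma MULp1 (p : T) : MUL p (ONE (lv p)) = p.
Proof. by tc p; rewrite /= MUL_mk mulg1r. Qed.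
Lemma MULV (p : T) : MUL (INV p) p = ONE (lv p).
Proof. by tc p; rewrite /= MUL_mk gmulV. Qed.
Lemma MULVr (p : T) : MUL p (INV p) = ONE (lv p).
Proof. by tc p; rewrite /= MUL_mk mulgVr. Qed.
Lemma INVK (p : T) : INV (INV p) = p.
Proof. by tc p; rewrite /INV /= ginvK. Qed.
Lemma INV_MUL (p q : T) : lv q = lv p -> INV (MUL p q) = MUL (INV q) (INV p).
Proof. tc p; tc q => /= e; tsub; by rewrite !MUL_mk /INV /= ginv_mul. Qed.
Lemma INV_ONE n : INV (ONE n) = ONE n.
Proof. by rewrite /INV /= ginv1. Qed.
Lemma MUL_can (p q r : T) : lv q = lv p -> lv r = lv p -> MUL p q = MUL p r -> q = r.
Proof.
tc p; tc q; tc r => /= e1 e2; tsub; rewrite !MUL_mk => h.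
by congr mk; apply: mulg_can (mk_inj h).
Qed.
Lemma INV_uniq (p q : T) : lv q = lv p -> MUL p q = ONE (lv p) -> q = INV p.
Proof.
move=> e h; apply: (@MUL_can p) => //; by rewrite MULVr.
Qed.

Lemma ACT_lt (p : T) k : ACT p k < (lv p).+1.
Proof. by rewrite /ACT ltn_ord. Qed.
Lemma ACT_le (p : T) k : ACT p k <= lv p.
Proof. by have := ACT_lt p k. Qed.
Lemma ACT_MUL (p q : T) k : lv q = lv p -> ACT (MUL p q) k = ACT p (ACT q k).
Proof. tc p; tc q => /= e; tsub; by rewrite MUL_mk /ACT /= gactM inord_val. Qed.
Lemma ACT_ONE n k : k <= n -> ACT (ONE n) k = k.
Proof. by move=> h; rewrite /ACT /= gact1 inordK. Qed.
Lemma ACT_INV (p : T) k : k <= lv p -> ACT (INV p) (ACT p k) = k.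
Proof. by tc p => /= h; rewrite /ACT /= inord_val gact_inv inordK. Qed.
Lemma ACT_INVr (p : T) k : k <= lv p -> ACT p (ACT (INV p) k) = k.
Proof. by tc p => /= h; rewrite /ACT /= inord_val gact_invr inordK. Qed.
Lemma ACT_inj (p : T) k k' : k <= lv p -> k' <= lv p -> ACT p k = ACT p k' -> k = k'.
Proof. by move=> h1 h2 e; rewrite -(ACT_INV h1) -(ACT_INV h2) e. Qed.


Ltac amb := case: HA => [a1 [a2 [a3 [a4 [a5 [a6 [a7 [a8 [a9 [a10 [a11 a12]]]]]]]]]]].
Lemma sLM n (g h : C n) : gsL (gmul n g h) = gmul n.+1 (gsL g) (gsL h).
Proof. by amb. Qed.
Lemma sRM n (g h : C n) : gsR (gmul n g h) = gmul n.+1 (gsR g) (gsR h).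
Proof. by amb. Qed.
Lemma fsL0 n (x : C n) : gface n 0 (gsL x) = x.
Proof. by amb. Qed.
Lemma fsLS n i (x : C n.+1) : i <= n.+1 -> gface n.+1 i.+1 (gsL x) = gsL (gface n i x).
Proof. by amb; apply: a4. Qed.
Lemma dsL0 n (x : C n) : gdeg n.+1 0 (gsL x) = gsL (gsL x).
Proof. by amb. Qed.
Lemma dsLS n j (x : C n) : j <= n -> gdeg n.+1 j.+1 (gsL x) = gsL (gdeg n j x).
Proof. by amb; apply: a6. Qed.
Lemma fsRt n (x : C n) : gface n n.+1 (gsR x) = x.
Proof. by amb. Qed.
Lemma fsR n i (x : C n.+1) : i <= n.+1 -> gface n.+1 i (gsR x) = gsR (gface n i x).
Proof. by amb; apply: a8. Qed.
Lemma dsRt n (x : C n) : gdeg n.+1 n.+1 (gsR x) = gsR (gsR x).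
Proof. by amb. Qed.
Lemma dsR n j (x : C n) : j <= n -> gdeg n.+1 j (gsR x) = gsR (gdeg n j x).
Proof. by amb; apply: a10. Qed.
Lemma piL n (g : C n) : gpi (gsL g) = sL (gpi g).
Proof. by amb. Qed.
Lemma piR n (g : C n) : gpi (gsR g) = sR (gpi g).
Proof. by amb. Qed.
Lemma surj n (s : Sn n) : exists g : C n, gpi g = s.
Proof. by case: HS => h _; apply: h. Qed.
Lemma piF n i (g : C n.+1) : i <= n.+1 -> gpi (gface n i g) = sface i (gpi g).
Proof. by case: HS => _ [h _]; apply: h. Qed.
Lemma piD n i (g : C n) : i <= n -> gpi (gdeg n i g) = sdeg i (gpi g).
Proof. by case: HS => _ [_ h]; apply: h. Qed.

Lemma SL_MUL (p q : T) : lv q = lv p -> SL (MUL p q) = MUL (SL p) (SL q).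
Proof. tc p; tc q => /= e; tsub; by rewrite !MUL_mk /SL /= sLM. Qed.
Lemma SR_MUL (p q : T) : lv q = lv p -> SR (MUL p q) = MUL (SR p) (SR q).
Proof. tc p; tc q => /= e; tsub; by rewrite !MUL_mk /SR /= sRM. Qed.
Lemma SL_ONE n : SL (ONE n) = ONE n.+1.
Proof. by rewrite /SL /= (hom_one (@sLM n)). Qed.
Lemma SR_ONE n : SR (ONE n) = ONE n.+1.
Proof. by rewrite /SR /= (hom_one (@sRM n)). Qed.
Lemma SL_INV (p : T) : SL (INV p) = INV (SL p).
Proof. by tc p; rewrite /SL /INV /= (hom_inv (@sLM _)). Qed.
Lemma SR_INV (p : T) : SR (INV p) = INV (SR p).
Proof. by tc p; rewrite /SR /INV /= (hom_inv (@sRM _)). Qed.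

Lemma DG_MUL i (p q : T) : i <= lv p -> lv q = lv p ->
  DG i (MUL p q) = MUL (DG i p) (DG (ACT (INV p) i) q).
Proof. tc p; tc q => /= h e; tsub; by rewrite !MUL_mk /DG /= gdeg_mulE. Qed.
Lemma FC_MUL i (p q : T) : 0 < lv p -> i <= lv p -> lv q = lv p ->
  FC i (MUL p q) = MUL (FC i p) (FC (ACT (INV p) i) q).
Proof.
elim/Tcase: p => n x; elim/Tcase: q => m y /= h0 h e; subst m.
case: n x y h0 h => [|n] x y //= _ h.
by rewrite !MUL_mk /= gface_mulE.
Qed.

Lemma DG_ONE i n : i <= n -> DG i (ONE n) = ONE n.+1.
Proof.
move=> h; apply: (@MUL_can (DG i (ONE n))) => //.
by rewrite MULp1 -{3}(MUL1 (ONE n)) DG_MUL //= ?ACT_ONE //; rewrite /INV /= ginv1 ACT_ONE.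
Qed.


Lemma FC_ONE i n : i <= n.+1 -> FC i (ONE n.+1) = ONE n.
Proof.
move=> h; apply: (@MUL_can (FC i (ONE n.+1))); rewrite ?lv_FC //.
have E : MUL (FC i (ONE n.+1)) (FC i (ONE n.+1)) = FC i (ONE n.+1).
  by rewrite -[in RHS](MUL1 (ONE n.+1)) FC_MUL //= INV_ONE ACT_ONE.
rewrite E; exact: (esym (MULp1 _)).
Qed.

Lemma DG_INV i (p : T) : i <= lv p -> INV (DG i p) = DG (ACT (INV p) i) (INV p).
Proof.
move=> h; symmetry; apply: INV_uniq => //.
by rewrite -DG_MUL // MULVr DG_ONE.
Qed.

Lemma FC_INV i (p : T) : 0 < lv p -> i <= lv p -> INV (FC i p) = FC (ACT (INV p) i) (INV p).
Proof.
move=> h0 h; symmetry; apply: INV_uniq; rewrite ?lv_FC //.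
rewrite -FC_MUL // MULVr; move: h0 h; elim/Tcase: p => [[|n] x] //= _ h.
exact: FC_ONE.
Qed.


Lemma ACT_SL (p : T) k : k <= (lv p).+1 ->
  ACT (SL p) k = if k == 0 then 0 else (ACT p k.-1).+1.
Proof.
elim/Tcase: p => n x /= hk; rewrite /ACT /= -gpiE piL /sL.
case: k hk => [|k] hk.
  have -> : inord 0 = ord0 :> 'I_n.+2 by apply/val_inj; rewrite /= inordK.
  by rewrite lift_perm_id.
have -> : (inord k.+1 : 'I_n.+2) = lift ord0 (inord k : 'I_n.+1).
  by apply/val_inj; rewrite /= !inordK.
by rewrite lift_perm_lift /= gpiE.
Qed.

Lemma ACT_SR (p : T) k : k <= (lv p).+1 ->
  ACT (SR p) k = if k == (lv p).+1 then k else ACT p k.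
Proof.
elim/Tcase: p => n x /= hk; rewrite /ACT /= -gpiE piR /sR.
case: eqP => [->|ne].
  have -> : inord n.+1 = ord_max :> 'I_n.+2 by apply/val_inj; rewrite /= inordK.
  by rewrite lift_perm_id.
have hk' : k < n.+1 by rewrite ltn_neqAle hk andbT; apply/eqP.
have -> : (inord k : 'I_n.+2) = lift ord_max (inord k : 'I_n.+1).
  by apply/val_inj; rewrite /= !inordK // /bump leqNgt hk'.
rewrite lift_perm_lift /= gpiE /bump leqNgt.
by have := ltn_ord (gact x (inord k)) => ->.
Qed.

Lemma ACT_DG i (p : T) k : i <= lv p -> k <= (lv p).+1 ->
  ACT (DG i p) k = if k == (ACT (INV p) i).+1 then i.+1
                   else bmp i.+1 (ACT p (ubmp (ACT (INV p) i).+1 k)).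
Proof.
elim/Tcase: p => n x /= hi hk; rewrite /ACT /= -gpiE piD // /sdeg.
set c := gact (ginv n x) (inord i).
have hc : ((gpi x)^-1)%g (inord i) = c by rewrite -gpi_inv gpiE.
rewrite hc; case: eqP => [e|ne].
  have -> : (inord k : 'I_n.+2) = lift ord0 c by apply/val_inj; rewrite /= inordK.
  by rewrite lift_perm_id /= inordK.
have -> : (inord k : 'I_n.+2) = lift (lift ord0 c) (inord (ubmp c.+1 k) : 'I_n.+1).
  have := ltn_ord c => hc'.
  by apply/val_inj; rewrite /= !inordK //; rewrite /ubmp /bump /=; case: ifP => ?; lia.
rewrite lift_perm_lift /= gpiE /bump /bmp inordK //; case: leqP => h //.
Qed.


Lemma ACT_FC i (p : T) k : 0 < lv p -> i <= lv p -> k <= (lv p).-1 ->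
  ACT (FC i p) k = ubmp i (ACT p (bmp (ACT (INV p) i) k)).
Proof.
elim/Tcase: p => [[|n] x] //= _ hi hk; rewrite /ACT /= -gpiE piF // /sface permE /dfun.
set s := gpi x; set ii : 'I_n.+2 := inord i; set y : 'I_n.+1 := inord k.
have hne : ii != s (lift (s^-1 ii)%g y).
  apply/eqP => h; have := neq_lift (s^-1 ii)%g y; by rewrite {1}h permK eqxx.
case: (unlift_some hne) => j hj -> /=.
have hc : (s^-1)%g ii = gact (ginv n.+1 x) (inord i) by rewrite /s -gpi_inv gpiE.
have e1 : lift (s^-1 ii)%g y = inord (bmp (gact (ginv n.+1 x) (inord i)) k) :> 'I_n.+2.
  apply/val_inj; rewrite /= inordK; last by rewrite /bmp; case: ifP => ?; lia.
  by rewrite hc /y /bump /bmp inordK //; case: ifP => ?; lia.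
move: hj; rewrite e1 /s gpiE => hj.
have := congr1 val hj; rewrite /= /ii inordK // => ->.
by rewrite /ubmp /bump; case: ifP => ?; lia.
Qed.


Lemma FC_FC i j (p : T) : i < j -> j <= lv p -> 1 < lv p ->
  FC i (FC j p) = FC j.-1 (FC i p).
Proof. by elim/Tcase: p => [[|[|n]] x] //= h1 h2 _; rewrite gface_face. Qed.
Lemma FC_DG_lt i j (p : T) : i < j -> j <= lv p -> 0 < lv p ->
  FC i (DG j p) = DG j.-1 (FC i p).
Proof. by elim/Tcase: p => [[|n] x] //= h1 h2 _; rewrite /DG /= gface_deg_lt. Qed.
Lemma FC_DG_eq j (p : T) : j <= lv p -> FC j (DG j p) = p.
Proof. by elim/Tcase: p => n x /= h; rewrite /DG /=; case: (gface_deg_eq C n j x h) => ->. Qed.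
Lemma FC_DG_eq1 j (p : T) : j <= lv p -> FC j.+1 (DG j p) = p.
Proof. by elim/Tcase: p => n x /= h; rewrite /DG /=; case: (gface_deg_eq C n j x h) => _ ->. Qed.
Lemma FC_DG_gt i j (p : T) : j.+1 < i -> i <= (lv p).+1 -> 0 < lv p ->
  FC i (DG j p) = DG j (FC i.-1 p).
Proof. by elim/Tcase: p => [[|n] x] //= h1 h2 _; rewrite /DG /= gface_deg_gt. Qed.
Lemma DG_DG i j (p : T) : i <= j -> j <= lv p -> DG i (DG j p) = DG j.+1 (DG i p).
Proof. by elim/Tcase: p => n x /= h1 h2; rewrite /DG /= gdeg_deg. Qed.

Lemma FC0_SL (p : T) : FC 0 (SL p) = p.
Proof. by elim/Tcase: p => n x; rewrite /SL /= fsL0. Qed.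
Lemma FCS_SL i (p : T) : 0 < lv p -> i <= lv p -> FC i.+1 (SL p) = SL (FC i p).
Proof. by elim/Tcase: p => [[|n] x] //= _ h; rewrite /SL /= fsLS. Qed.
Lemma DG0_SL (p : T) : DG 0 (SL p) = SL (SL p).
Proof. by elim/Tcase: p => n x; rewrite /SL /DG /= dsL0. Qed.
Lemma DGS_SL j (p : T) : j <= lv p -> DG j.+1 (SL p) = SL (DG j p).
Proof. by elim/Tcase: p => n x /= h; rewrite /SL /DG /= dsLS. Qed.
Lemma FCt_SR (p : T) : FC (lv p).+1 (SR p) = p.
Proof. by elim/Tcase: p => n x; rewrite /SR /= fsRt. Qed.
Lemma FC_SR i (p : T) : 0 < lv p -> i <= lv p -> FC i (SR p) = SR (FC i p).
Proof. by elim/Tcase: p => [[|n] x] //= _ h; rewrite /SR /= fsR. Qed.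
Lemma DGt_SR (p : T) : DG (lv p).+1 (SR p) = SR (SR p).
Proof. by elim/Tcase: p => n x; rewrite /SR /DG /= dsRt. Qed.
Lemma DG_SR j (p : T) : j <= lv p -> DG j (SR p) = SR (DG j p).
Proof. by elim/Tcase: p => n x /= h; rewrite /SR /DG /= dsR. Qed.


Definition sh h m v := if v < h then v else v + m.
Definition BLK n i (b : T) := iter i SL (iter (n - i) SR b).
Definition DGit i m (a : T) := iter m (DG i) a.
Ltac arith := rewrite ?/sh ?/bmp ?/ubmp ?/bump /=; arith0.

Definition OC (a b : T) i := MUL (BLK (lv a) i b) (DGit i (lv b) a).

Lemma lv_BLK n i b : i <= n -> lv (BLK n i b) = n + lv b.
Proof. by move=> h; rewrite /BLK lv_iterSL lv_iterSR; lia. Qed.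
Lemma lv_DGit i m a : lv (DGit i m a) = m + lv a.
Proof. exact: lv_iterDG. Qed.
Lemma lv_OC a b i : i <= lv a -> lv (OC a b i) = lv a + lv b.
Proof. by move=> h; rewrite /OC lv_MUL lv_BLK. Qed.

Lemma iterSL_MUL k (p q : T) : lv q = lv p ->
  iter k SL (MUL p q) = MUL (iter k SL p) (iter k SL q).
Proof. by move=> e; elim: k => //= k ->; rewrite SL_MUL // !lv_iterSL e. Qed.
Lemma iterSR_MUL k (p q : T) : lv q = lv p ->
  iter k SR (MUL p q) = MUL (iter k SR p) (iter k SR q).
Proof. by move=> e; elim: k => //= k ->; rewrite SR_MUL // !lv_iterSR e. Qed.
Lemma iterSL_ONE k n : iter k SL (ONE n) = ONE (k + n).
Proof. by elim: k => //= k ->; rewrite SL_ONE. Qed.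
Lemma iterSR_ONE k n : iter k SR (ONE n) = ONE (k + n).
Proof. by elim: k => //= k ->; rewrite SR_ONE. Qed.
Lemma iterSL_INV k (p : T) : iter k SL (INV p) = INV (iter k SL p).
Proof. by elim: k => //= k ->; rewrite SL_INV. Qed.
Lemma iterSR_INV k (p : T) : iter k SR (INV p) = INV (iter k SR p).
Proof. by elim: k => //= k ->; rewrite SR_INV. Qed.

Lemma BLK_MUL n i (p q : T) : lv q = lv p -> BLK n i (MUL p q) = MUL (BLK n i p) (BLK n i q).
Proof.
move=> e; rewrite /BLK iterSR_MUL // iterSL_MUL // !lv_iterSR e //.
Qed.
Lemma BLK_ONE n i m : i <= n -> BLK n i (ONE m) = ONE (n + m).
Proof. by move=> h; rewrite /BLK iterSR_ONE iterSL_ONE; congr ONE; lia. Qed.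
Lemma BLK_INV n i (p : T) : BLK n i (INV p) = INV (BLK n i p).
Proof. by rewrite /BLK iterSR_INV iterSL_INV. Qed.

Lemma ACT_iterSL a (p : T) x : x <= a + lv p ->
  ACT (iter a SL p) x = if x < a then x else a + ACT p (x - a).
Proof.
elim: a x => [|a IH] x hx /=; first by rewrite subn0.
rewrite ACT_SL ?lv_iterSL //; case: x hx => [|x] hx //=.
rewrite IH; last by lia.
by case: ifP => h; rewrite ltnS h.
Qed.

Lemma ACT_iterSR a (p : T) x : x <= a + lv p ->
  ACT (iter a SR p) x = if x <= lv p then ACT p x else x.
Proof.
elim: a x => [|a IH] x hx /=; first by rewrite hx.
rewrite ACT_SR ?lv_iterSR //; case: eqP => [->|ne].
  by case: ifP => //; lia.
rewrite IH //; lia.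
Qed.

Lemma ACT_BLK_in n i (b : T) j : i <= n -> j <= lv b ->
  ACT (BLK n i b) (i + j) = i + ACT b j.
Proof.
move=> hi hj; rewrite /BLK ACT_iterSL ?lv_iterSR; last by lia.
rewrite ltnNge leq_addr /= addKn ACT_iterSR ?hj //; lia.
Qed.

Lemma ACT_BLK_out n i (b : T) y : i <= n -> y <= n + lv b -> (y < i) || (i + lv b < y) ->
  ACT (BLK n i b) y = y.
Proof.
move=> hi hy hyi; rewrite /BLK ACT_iterSL ?lv_iterSR; last by lia.
case: ifP => // h1; rewrite ACT_iterSR; last by lia.
case: ifP => h2; lia.
Qed.


Lemma lv_DGit' i m a : lv (iter m (DG i) a) = m + lv a.
Proof. exact: lv_iterDG. Qed.

Lemma ACT_Aneq (a : T) i y : i <= lv a -> y <= lv a -> y != ACT (INV a) i -> ACT a y != i.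
Proof.
move=> hi hy; apply: contra => /eqP <-; by rewrite ACT_INV.
Qed.

Lemma DGit_fwd i (a : T) m : i <= lv a ->
  (forall j, j <= m -> ACT (DGit i m a) (ACT (INV a) i + j) = i + j) /\
  (forall y, y <= lv a -> y != ACT (INV a) i ->
     ACT (DGit i m a) (sh (ACT (INV a) i) m y) = sh i m (ACT a y)).
Proof.
move=> hi; set c := ACT (INV a) i.
have hc : c <= lv a by exact: ACT_le.
elim: m => [|m [IH1 IH2]].
  split=> [j hj|y hy _]; first by move: hj; rewrite leqn0 => /eqP ->; rewrite !addn0 /DGit /= ACT_INVr.
  by rewrite /sh /DGit /= !addn0 !if_same.
have hY : ACT (DGit i m a) c = i by rewrite -[c]addn0 IH1 ?addn0.
have hlY : lv (DGit i m a) = m + lv a by exact: lv_iterDG.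
have hc' : ACT (INV (DGit i m a)) i = c.
  by have := @ACT_INV (DGit i m a) c; rewrite hY hlY; apply; lia.
rewrite /DGit /= -/(DGit i m a).
split=> [j hj|y hy hyc].
  rewrite ACT_DG ?hlY; try lia; rewrite hc'.
  case: j hj => [|[|j]] hj.
  - rewrite !addn0 (_ : (c == c.+1) = false); last by apply/negbTE; lia.
    rewrite (_ : ubmp c.+1 c = c); last by rewrite /ubmp; case: ifP => //; lia.
    by rewrite hY /bmp; case: ifP => //; lia.
  - by rewrite addn1 eqxx addn1.
  - rewrite (_ : (c + j.+2 == c.+1) = false); last by apply/negbTE; lia.
    rewrite (_ : ubmp c.+1 (c + j.+2) = c + j.+1); last by rewrite /ubmp; case: ifP => ?; lia.
    rewrite IH1; last by lia.
    by rewrite /bmp; case: ifP => ?; lia.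
have hA := ACT_Aneq hi hy hyc.
have hA' : ACT a y <= lv a by exact: ACT_le.
rewrite ACT_DG ?hlY; last 2 first; [lia | move: hyc; arith |].
rewrite hc' (_ : (sh c m.+1 y == c.+1) = false); last first.
  by apply/negbTE; move: hyc; arith.
rewrite (_ : ubmp c.+1 (sh c m.+1 y) = sh c m y); last first.
  by move: hyc; arith.
rewrite IH2 //.
by move: hA; arith.
Qed.


Lemma ACT_INV_DGit i m (a : T) : i <= lv a -> ACT (INV (DGit i m a)) i = ACT (INV a) i.
Proof.
move=> hi; case: (DGit_fwd m hi) => h1 _.
have := h1 0 (leq0n _); rewrite !addn0 => e.
have := @ACT_INV (DGit i m a) (ACT (INV a) i); rewrite e; apply.
rewrite lv_DGit; have := ACT_le (INV a) i; rewrite lv_INV; lia.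
Qed.

Lemma DGit_INV i m (a : T) : i <= lv a ->
  INV (DGit i m a) = DGit (ACT (INV a) i) m (INV a).
Proof.
move=> hi; elim: m => [|m IH] //=.
rewrite -/(DGit i m a) -/(DGit _ m (INV a)) DG_INV ?lv_DGit; last by lia.
by rewrite ACT_INV_DGit // IH.
Qed.

Lemma DGit_MUL i m (p q : T) : i <= lv p -> lv q = lv p ->
  DGit i m (MUL p q) = MUL (DGit i m p) (DGit (ACT (INV p) i) m q).
Proof.
move=> hi e; elim: m => [|m IH] //=.
rewrite -/(DGit i m (MUL p q)) IH -/(DGit i m p) -/(DGit _ m q).
rewrite DG_MUL ?lv_DGit ?e //; last by lia.
by rewrite ACT_INV_DGit.
Qed.

Lemma DGit_ONE i m n : i <= n -> DGit i m (ONE n) = ONE (m + n).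
Proof.
move=> hi; elim: m => [|m IH] //=.
by rewrite -/(DGit i m _) IH DG_ONE //; lia.
Qed.

Lemma OC_INV_in (a b : T) i j : i <= lv a -> j <= lv b ->
  ACT (INV (OC a b i)) (i + j) = ACT (INV a) i + ACT (INV b) j.
Proof.
move=> hi hj; rewrite /OC INV_MUL; last by rewrite lv_BLK // lv_DGit addnC.
rewrite ACT_MUL; last by rewrite lv_INV lv_BLK // lv_INV lv_DGit addnC.
rewrite -BLK_INV ACT_BLK_in ?lv_INV // DGit_INV //.
set c := ACT (INV a) i.
have hc : c <= lv (INV a) by exact: ACT_le.
case: (@DGit_fwd c (INV a) (lv b) hc) => h1 _.
have e : ACT (INV (INV a)) c = i by rewrite INVK /c ACT_INVr.
move: h1; rewrite e => h1; rewrite h1 //.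
have := ACT_le (INV b) j; by rewrite lv_INV.
Qed.

Lemma OC_INV_out (a b : T) i y : i <= lv a -> y <= lv a -> y != i ->
  ACT (INV (OC a b i)) (sh i (lv b) y) = sh (ACT (INV a) i) (lv b) (ACT (INV a) y).
Proof.
move=> hi hy hyi; rewrite /OC INV_MUL; last by rewrite lv_BLK // lv_DGit addnC.
rewrite ACT_MUL; last by rewrite lv_INV lv_BLK // lv_INV lv_DGit addnC.
rewrite -BLK_INV ACT_BLK_out ?lv_INV //; last 2 first.
- by move: hyi; arith.
- by move: hyi; arith.
rewrite DGit_INV //.
set c := ACT (INV a) i.
have hc : c <= lv (INV a) by exact: ACT_le.
case: (@DGit_fwd c (INV a) (lv b) hc) => _ h2.
have e : ACT (INV (INV a)) c = i by rewrite INVK /c ACT_INVr.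
move: h2; rewrite e => h2; rewrite h2 //.
Qed.


Lemma mk_blk n m (i : 'I_n.+1) (b : C m) :
  mk (blk (@gsL C) (@gsR C) i b) = BLK n i (mk b).
Proof. by rewrite /blk mk_cast !mk_iterL. Qed.

Lemma mk_gocomp n m (a : C n) (b : C m) (i : 'I_n.+1) :
  mk (gocomp a b i) = OC (mk a) (mk b) i.
Proof. by rewrite /gocomp /ocomp -MUL_mk mk_blk mk_cast mk_iterD. Qed.

Lemma OPER (a b : T) i : i <= lv a ->
  MUL (BLK (lv a) i b) (DGit i (lv b) a) = MUL (DGit i (lv b) a) (BLK (lv a) (ACT (INV a) i) b).
Proof.
elim/Tcase: a => n a; elim/Tcase: b => m b /= hi.
have := congr1 mk (HO a b (inord i)).
rewrite -!MUL_mk /gblk /gdegit !mk_blk mk_cast mk_iterD inordK //.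
Qed.

Lemma MUL_ONEr (p : T) n : lv p = n -> MUL p (ONE n) = p.
Proof. by move=> <-; rewrite MULp1. Qed.
Lemma MUL_ONEl (p : T) n : lv p = n -> MUL (ONE n) p = p.
Proof. by move=> <-; rewrite MUL1. Qed.

Lemma MON (a b : T) :
  MUL (iter (lv b).+1 SR a) (iter (lv a).+1 SL b) = MUL (iter (lv a).+1 SL b) (iter (lv b).+1 SR a).
Proof.
elim/Tcase: a => n a; elim/Tcase: b => m b /=.
have mon (x : C n) (y : C m) : mk (gmon x y) = MUL (iter m.+1 SR (mk x)) (iter n.+1 SL (mk y)).
  rewrite /gmon -MUL_mk mk_cast. rewrite (mk_iterL (@gsR C)). congr MUL; exact: (mk_iterL (@gsL C) n.+1 y).
have h1 := congr1 mk (HM a (gone C n) (gone C m) b).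
have h2 := congr1 mk (HM (gone C n) a b (gone C m)).
rewrite gmul1 mulg1r in h1; rewrite gmul1 mulg1r in h2.
rewrite -MUL_mk !mon in h1; rewrite -MUL_mk !mon in h2.
rewrite h1 in h2.
have e1 : iter n.+1 SL (mk (gone C m)) = ONE (n.+1 + m) by rewrite iterSL_ONE.
have e2 : iter m.+1 SR (mk (gone C n)) = ONE (m.+1 + n) by rewrite iterSR_ONE.
rewrite e1 e2 in h2.
rewrite !MUL_ONEr ?MUL_ONEl ?lv_iterSL ?lv_iterSR /= in h2; try lia.
done.
Qed.


Lemma conj_eq (p q r : T) : lv q = lv p -> lv r = lv p ->
  MUL r p = MUL p q -> q = MUL (INV p) (MUL r p).
Proof.
move=> e1 e2 E; rewrite E MULA ?lv_INV // MULV -e1; by rewrite MUL1.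
Qed.

Lemma DGit_SR j m (p : T) : j <= lv p -> DGit j m (SR p) = SR (DGit j m p).
Proof.
move=> h; elim: m => [|m IH] //=.
by rewrite -/(DGit j m _) IH DG_SR // lv_DGit; lia.
Qed.

Lemma SLSR (c : T) : SR (SL c) = SL (SR c).
Proof.
have [al hal] := surj (tperm ord0 ord_max : Sn 1).
set A : T := mk al.
have hA0 : ACT (INV A) 0 = 1.
  rewrite /ACT /= -gpiE gpi_inv hal tpermV.
  have -> : (inord 0 : 'I_2) = ord0 by apply/val_inj; rewrite /= inordK.
  by rewrite tpermL.
have hA1 : ACT (INV (SR A)) 0 = 1 by rewrite -SR_INV ACT_SR.
set t := DGit 0 (lv c) A.
have E1 := @OPER A c 0 (leq0n _).
rewrite hA0 /BLK /= -/t in E1.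
have E2 := @OPER (SR A) c 0 (leq0n _).
rewrite hA1 /BLK /= DGit_SR // -/t in E2.
have lt : lv t = (lv c).+1 by rewrite /t lv_DGit addn1.
rewrite (conj_eq _ _ E1) //.
rewrite (conj_eq _ _ E2) ?lv_SR ?lt //.
by rewrite SR_MUL ?SR_MUL ?SR_INV // ?lv_MUL ?lv_INV ?lv_SR ?lt.
Qed.


Lemma iterSR_SL a (x : T) : iter a SR (SL x) = SL (iter a SR x).
Proof. by elim: a => //= a ->; rewrite SLSR. Qed.
Lemma iterSR_iterSL a b (x : T) : iter a SR (iter b SL x) = iter b SL (iter a SR x).
Proof. by elim: b => //= b <-; rewrite iterSR_SL. Qed.

Lemma BLK_BLK n m i j (c : T) : i <= n -> j <= m ->
  BLK n i (BLK m j c) = BLK (n + m) (i + j) c.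
Proof.
move=> hi hj; rewrite /BLK iterSR_iterSL -ssrnat.iterD addnC -ssrnat.iterD.
congr (iter _ SL (iter _ SR c)); lia.
Qed.

Lemma DG_iterSL a q (x : T) : q <= lv x -> DG (a + q) (iter a SL x) = iter a SL (DG q x).
Proof.
move=> h; elim: a => //= a IH; rewrite addSn DGS_SL ?IH // lv_iterSL; lia.
Qed.
Lemma DG_iterSR a q (x : T) : q <= lv x -> DG q (iter a SR x) = iter a SR (DG q x).
Proof.
move=> h; elim: a => //= a IH; rewrite DG_SR ?IH // lv_iterSR; lia.
Qed.
Lemma DG_iterSR_top r q (b : T) : lv b < q -> q <= r + lv b ->
  DG q (iter r SR b) = iter r.+1 SR b.
Proof.
elim: r => [|r IH] h1 h2 /=; first by lia.
case: (eqVneq q (lv (iter r SR b)).+1) => [->|ne]; first by rewrite DGt_SR.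
rewrite DG_SR; last by rewrite lv_iterSR; move: ne; rewrite lv_iterSR; lia.
rewrite IH //; move: ne; rewrite lv_iterSR; lia.
Qed.
Lemma DG_iterSL_low a k (x : T) : k < a -> DG k (iter a SL x) = iter a.+1 SL x.
Proof.
elim: a k => [|a IH] k h //=.
case: k h => [|k] h; first by rewrite DG0_SL.
rewrite DGS_SL ?IH // lv_iterSL; lia.
Qed.

Lemma DG_BLK_in n i k (b : T) : i <= n -> i <= k -> k <= i + lv b ->
  DG k (BLK n i b) = BLK n i (DG (k - i) b).
Proof.
move=> h1 h2 h3; rewrite /BLK -{1}(subnKC h2) DG_iterSL ?lv_iterSR ?DG_iterSR //; lia.
Qed.
Lemma DG_BLK_right n i k (b : T) : i <= n -> i + lv b < k -> k <= n + lv b ->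
  DG k (BLK n i b) = BLK n.+1 i b.
Proof.
move=> h1 h2 h3; rewrite /BLK.
have hk : i <= k by lia.
rewrite -{1}(subnKC hk) DG_iterSL ?lv_iterSR; last by lia.
rewrite DG_iterSR_top; try lia.
by rewrite subSn.
Qed.
Lemma DG_BLK_left n i k (b : T) : k < i -> DG k (BLK n i b) = BLK n.+1 i.+1 b.
Proof. by move=> h; rewrite /BLK DG_iterSL_low. Qed.

Lemma DGit_BLK_in n i k p (b : T) : i <= n -> i <= k -> k <= i + lv b ->
  DGit k p (BLK n i b) = BLK n i (DGit (k - i) p b).
Proof.
move=> h1 h2 h3; elim: p => [|p IH] //=.
rewrite -/(DGit k p _) IH DG_BLK_in // lv_DGit; lia.
Qed.
Lemma DGit_BLK_right n i k p (b : T) : i <= n -> i + lv b < k -> k <= n + lv b ->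
  DGit k p (BLK n i b) = BLK (n + p) i b.
Proof.
move=> h1 h2 h3; elim: p => [|p IH] /=; first by rewrite addn0.
rewrite -/(DGit k p _) IH DG_BLK_right ?addnS //; lia.
Qed.
Lemma DGit_BLK_left n i k p (b : T) : k < i -> DGit k p (BLK n i b) = BLK (n + p) (i + p) b.
Proof.
move=> h; elim: p => [|p IH] /=; first by rewrite !addn0.
rewrite -/(DGit k p _) IH DG_BLK_left ?addnS //; lia.
Qed.

Lemma DG_DGit_in i k m (a : T) : i <= lv a -> k <= m ->
  DG (i + k) (DGit i m a) = DGit i m.+1 a.
Proof.
move=> hi; elim: m k => [|m IH] k hk /=.
  by move: hk; rewrite leqn0 => /eqP ->; rewrite addn0.
case: k hk => [|k] hk; first by rewrite addn0.
rewrite -/(DGit i m a) addnS -DG_DG ?lv_DGit; try lia.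
by rewrite IH.
Qed.
Lemma DGit_DGit_in i k m p (a : T) : i <= lv a -> k <= m ->
  DGit (i + k) p (DGit i m a) = DGit i (m + p) a.
Proof.
move=> hi hk; elim: p => [|p IH] /=; first by rewrite addn0.
rewrite -/(DGit (i + k) p _) IH addnS DG_DGit_in //; lia.
Qed.
Lemma DG_DGit_out i k m (a : T) : i < k -> k <= lv a ->
  DG (k + m) (DGit i m a) = DGit i m (DG k a).
Proof.
move=> h1 h2; elim: m => [|m IH] /=; first by rewrite addn0.
rewrite -/(DGit i m a) -/(DGit i m (DG k a)) addnS -DG_DG ?lv_DGit ?IH //; lia.
Qed.
Lemma DGit_DGit_out i k m p (a : T) : i < k -> k <= lv a ->
  DGit (k + m) p (DGit i m a) = DGit i m (DGit k p a).
Proof.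
move=> h1 h2; elim: p => [|p IH] //=.
rewrite -/(DGit (k + m) p _) -/(DGit k p a) IH DG_DGit_out // lv_DGit; lia.
Qed.


Lemma DGitS i m (a : T) : DGit i m.+1 a = DG i (DGit i m a).
Proof. by []. Qed.

Lemma FC_DGit_in i j m (a : T) : i <= lv a -> j <= m.+1 ->
  FC (i + j) (DGit i m.+1 a) = DGit i m a.
Proof.
move=> hi; elim: m j => [|m IH] j hj.
  rewrite DGitS (_ : DGit i 0 a = a) //.
  case: j hj => [|[|j]] hj //; first by rewrite addn0 FC_DG_eq.
  by rewrite addn1 FC_DG_eq1.
rewrite (DGitS i m.+1 a).
case: j hj => [|[|j]] hj.
- by rewrite addn0 FC_DG_eq // lv_DG lv_DGit; lia.
- by rewrite addn1 FC_DG_eq1 // lv_DG lv_DGit; lia.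
rewrite FC_DG_gt ?lv_DG ?lv_DGit; try lia.
by rewrite (_ : (i + j.+2).-1 = i + j.+1) ?IH //; lia.
Qed.

Lemma FC_DGit_left q k m (a : T) : q < k -> k <= lv a ->
  FC q (DGit k m a) = DGit k.-1 m (FC q a).
Proof.
move=> h1 h2; elim: m => [|m IH] //; rewrite !DGitS.
rewrite FC_DG_lt ?lv_DGit; try lia.
by rewrite IH.
Qed.

Lemma FC_DGit_right q k m (a : T) : k < q -> q <= lv a ->
  FC (q + m) (DGit k m a) = DGit k m (FC q a).
Proof.
move=> h1 h2; elim: m => [|m IH]; first by rewrite addn0.
rewrite !DGitS addnS FC_DG_gt ?lv_DGit; try lia.
by rewrite IH.
Qed.

Lemma FC_iterSL a q (x : T) : 0 < lv x -> q <= lv x ->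
  FC (a + q) (iter a SL x) = iter a SL (FC q x).
Proof.
move=> h0 h; elim: a => // a IH; rewrite !iterS addSn FCS_SL ?IH // lv_iterSL; lia.
Qed.
Lemma FC_iterSR a q (x : T) : 0 < lv x -> q <= lv x ->
  FC q (iter a SR x) = iter a SR (FC q x).
Proof.
move=> h0 h; elim: a => // a IH; rewrite !iterS FC_SR ?IH // lv_iterSR; lia.
Qed.
Lemma FC_iterSR_top r q (b : T) : lv b < q -> q <= r + lv b ->
  FC q (iter r SR b) = iter r.-1 SR b.
Proof.
elim: r => [|r IH] h1 h2; first by lia.
rewrite iterS; case: (eqVneq q (lv (iter r SR b)).+1) => [->|ne]; first by rewrite FCt_SR.
move: ne; rewrite lv_iterSR => ne.
rewrite FC_SR ?lv_iterSR; try lia.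
rewrite IH; try lia.
by case: r IH h2 ne => [|r] _ h2 ne; [lia | rewrite iterS].
Qed.
Lemma FC_iterSL_low a q (x : T) : q < a -> FC q (iter a SL x) = iter a.-1 SL x.
Proof.
elim: a q => [|a IH] q h //; rewrite iterS.
case: q h => [|q] h; first by rewrite FC0_SL.
rewrite FCS_SL ?lv_iterSL; try lia.
rewrite IH //; by case: a IH h => [|a] _ h; [lia | rewrite iterS].
Qed.

Lemma FC_BLK_in n i j (b : T) : i <= n -> 0 < lv b -> j <= lv b ->
  FC (i + j) (BLK n i b) = BLK n i (FC j b).
Proof.
move=> h1 h0 h2; rewrite /BLK FC_iterSL ?lv_iterSR ?FC_iterSR //; lia.
Qed.
Lemma FC_BLK_left n i q (b : T) : q < i -> i <= n.+1 ->
  FC q (BLK n.+1 i b) = BLK n i.-1 b.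
Proof.
move=> h1 h2; rewrite /BLK FC_iterSL_low //; congr (iter _ SL (iter _ SR b)); lia.
Qed.
Lemma FC_BLK_right n i q (b : T) : i <= n.+1 -> i + lv b < q -> q <= n.+1 + lv b ->
  FC q (BLK n.+1 i b) = BLK n i b.
Proof.
move=> h1 h2 h3; rewrite /BLK.
have hq : i <= q by lia.
rewrite -{1}(subnKC hq) FC_iterSL ?lv_iterSR; try lia.
rewrite FC_iterSR_top; try lia.
by congr (iter _ SL (iter _ SR b)); lia.
Qed.


Lemma OC_unit_l (b : T) : OC (ONE 0) b 0 = b.
Proof. by rewrite /OC DGit_ONE // MUL_ONEr // addn0. Qed.

Lemma OC_unit_r (a : T) i : i <= lv a -> OC a (ONE 0) i = a.
Proof. by move=> h; rewrite /OC BLK_ONE // MUL_ONEl // addn0. Qed.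

Lemma ACT_INV_BLK_in n i j (b : T) : i <= n -> j <= lv b ->
  ACT (INV (BLK n i b)) (i + j) = i + ACT (INV b) j.
Proof. by move=> h1 h2; rewrite -BLK_INV ACT_BLK_in. Qed.
Lemma ACT_INV_BLK_out n i (b : T) y : i <= n -> y <= n + lv b -> (y < i) || (i + lv b < y) ->
  ACT (INV (BLK n i b)) y = y.
Proof. by move=> h1 h2 h3; rewrite -BLK_INV ACT_BLK_out. Qed.

Lemma OC_seq (a b c : T) i j : i <= lv a -> j <= lv b ->
  OC a (OC b c j) i = OC (OC a b i) c (i + j).
Proof.
move=> hi hj; rewrite /OC !lv_MUL !lv_BLK //.
have hj' := ACT_le (INV b) j; rewrite lv_INV in hj'.
rewrite DGit_MUL ?lv_BLK ?lv_DGit; try lia.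
rewrite ACT_INV_BLK_in // DGit_DGit_in // DGit_BLK_in; try lia.
rewrite BLK_MUL ?lv_BLK ?lv_DGit; try lia.
rewrite BLK_BLK // (_ : i + j - i = j); last by lia.
rewrite MULA ?lv_BLK ?lv_DGit ?lv_MUL; try lia.
by rewrite addnC.
Qed.


Lemma BLK_comm n i k (b c : T) : i < k -> k <= n ->
  MUL (BLK (n + lv c) i b) (BLK (n + lv b) (k + lv b) c) =
  MUL (BLK (n + lv b) (k + lv b) c) (BLK (n + lv c) i b).
Proof.
move=> h1 h2.
set c' := iter (k - i - 1) SL (iter (n - k) SR c).
have lc' : lv c' = k - i - 1 + (n - k + lv c) by rewrite /c' lv_iterSL lv_iterSR.
have eX : BLK (n + lv b) (k + lv b) c = iter i SL (iter (lv b).+1 SL c').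
  rewrite /BLK /c' -!ssrnat.iterD; congr (iter _ SL (iter _ SR c)); lia.
have eY : BLK (n + lv c) i b = iter i SL (iter (lv c').+1 SR b).
  rewrite /BLK; congr (iter _ SL (iter _ SR b)); lia.
have el : lv (iter (lv b).+1 SL c') = lv (iter (lv c').+1 SR b).
  by rewrite lv_iterSL lv_iterSR; lia.
by rewrite eX eY -!iterSL_MUL // MON.
Qed.

Lemma OC_par (a b c : T) i k : i < k -> k <= lv a ->
  OC (OC a b i) c (k + lv b) = OC (OC a c k) b i.
Proof.
move=> h1 h2; rewrite /OC !lv_MUL !lv_BLK //; try lia.
rewrite DGit_MUL ?lv_BLK ?lv_DGit; try lia.
rewrite ACT_INV_BLK_out; try (apply/orP; right); try lia.
rewrite DGit_BLK_right; try lia.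
rewrite DGit_DGit_out //.
rewrite DGit_MUL ?lv_BLK ?lv_DGit; try lia.
rewrite ACT_INV_BLK_out; try (apply/orP; left); try lia.
rewrite DGit_BLK_left //.
rewrite !MULA ?lv_BLK ?lv_DGit; try lia.
by rewrite BLK_comm.
Qed.


Lemma OC_F1 (a b : T) i j : i <= lv a -> 0 < lv b -> j <= lv b ->
  FC (i + j) (OC a b i) = OC a (FC j b) i.
Proof.
move=> hi h0 hj; rewrite /OC lv_FC.
have hj' := ACT_le (INV b) j; rewrite lv_INV in hj'.
have [m hm] : exists m, lv b = m.+1 by case: (lv b) h0 => // m; exists m.
rewrite hm /= FC_MUL ?lv_BLK ?lv_DGit; try lia.
rewrite ACT_INV_BLK_in ?FC_DGit_in ?FC_BLK_in //; try lia.
by rewrite lv_DG lv_DGit; lia.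
Qed.

Lemma OC_F2 (a b : T) q k : q < k -> k <= lv a ->
  FC q (OC a b k) = OC (FC q a) b k.-1.
Proof.
move=> h1 h2; rewrite /OC lv_FC.
rewrite FC_MUL ?lv_BLK ?lv_DGit; try lia.
rewrite ACT_INV_BLK_out; try (apply/orP; left); try lia.
rewrite FC_DGit_left //.
case: (lv a) h2 => [|n] h2; first by lia.
by rewrite FC_BLK_left.
Qed.

Lemma OC_F3 (a b : T) q k : k < q -> q <= lv a ->
  FC (q + lv b) (OC a b k) = OC (FC q a) b k.
Proof.
move=> h1 h2; rewrite /OC lv_FC.
rewrite FC_MUL ?lv_BLK ?lv_DGit; try lia.
rewrite ACT_INV_BLK_out; try (apply/orP; right); try lia.
rewrite FC_DGit_right //.
case: (lv a) h2 => [|n] h2; first by lia.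
by rewrite FC_BLK_right //; lia.
Qed.

Lemma OC_IC (f f' g g' : T) k : lv f' = lv f -> lv g' = lv g -> k <= lv f ->
  OC (MUL f f') (MUL g g') k = MUL (OC f g k) (OC f' g' (ACT (INV f) k)).
Proof.
move=> e1 e2 hk; rewrite /OC !lv_MUL e1 e2.
have hk' := ACT_le (INV f) k; rewrite lv_INV in hk'.
rewrite BLK_MUL // DGit_MUL //.
have O := @OPER f g' k hk; rewrite e2 in O.
rewrite -!MULA ?lv_MUL ?lv_BLK ?lv_DGit ?e1 ?e2; try lia.
congr (MUL _ _).
rewrite (MULA (p:=BLK (lv f) k g')) ?lv_BLK ?lv_DGit ?e1 ?e2; try lia.
rewrite O -MULA ?lv_BLK ?lv_DGit ?e1 ?e2 //; lia.
Qed.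


Lemma gpi_iterL (f : forall k, C k -> C k.+1) (g : forall k, Sn k -> Sn k.+1) a n (x : C n) :
  (forall k (y : C k), gpi (f k y) = g k (gpi y)) -> gpi (iterL f a x) = iterL g a (gpi x).
Proof. by move=> h; elim: a => //= a IH; rewrite h IH. Qed.

Lemma gpi_iterD i a n (x : C n) : i <= n ->
  gpi (Defs.iterD (@gdeg C) i a x) = Defs.iterD sdeg i a (gpi x).
Proof.
move=> h; elim: a => //= a IH; rewrite piD; [by rewrite IH | exact: (leq_trans h (leq_addl a n))].
Qed.

Lemma cast_gpi a b (e : a = b) (x : C a) : cast Sn e (gpi x) = gpi (cast C e x).
Proof. by case: b / e. Qed.

Lemma cast_pair a b (e : a = b) (s : Sn a) (g : C a) :
  cast (GaMor C) e (s, g) = (cast Sn e s, cast C e g).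
Proof. by case: b / e. Qed.

Lemma socomp_gpi n m (a : C n) (b : C m) (i : 'I_n.+1) :
  socomp (gpi a) (gpi b) i = gpi (gocomp a b i).
Proof.
rewrite /socomp /gocomp /ocomp gpi_mul /blk -!cast_gpi.
rewrite (gpi_iterL _ _ (@piL)) (gpi_iterL _ _ (@piR)) gpi_iterD //.
by rewrite -ltnS.
Qed.

Lemma sface_gpi n i (a : C n.+1) : i <= n.+1 -> sface i (gpi a) = gpi (gface n i a).
Proof. by move=> h; rewrite piF. Qed.

Lemma mk_ginv n (x : C n) : mk (ginv n x) = INV (mk x).
Proof. by []. Qed.

Lemma idxE n (a : C n) i : nat_of_ord (((gpi a)^-1)%g (inord i)) = ACT (INV (mk a)) i.
Proof. by rewrite -gpi_inv gpiE. Qed.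

Lemma mk_gocomp_inord n m (a : C n) (b : C m) i : i <= n ->
  mk (gocomp a b (inord i)) = OC (mk a) (mk b) i.
Proof. by move=> h; rewrite mk_gocomp inordK. Qed.

Lemma mk_gocomp_idx n m (a f : C n) (b : C m) i :
  mk (gocomp f b (((gpi a)^-1)%g (inord i))) = OC (mk f) (mk b) (ACT (INV (mk a)) i).
Proof. by rewrite mk_gocomp idxE. Qed.

Lemma mk_gface_idx n (a f : C n.+1) i :
  mk (gface n (((gpi a)^-1)%g (inord i)) f) = FC (ACT (INV (mk a)) i) (mk f).
Proof. by rewrite -idxE. Qed.

Lemma ACT_INVle (a : T) i : ACT (INV a) i <= lv a.
Proof. by have := ACT_le (INV a) i; rewrite lv_INV. Qed.

Notation GM := (Gamma C).
Ltac mkify := repeat (rewrite ?mk_ginv ?mk_gocomp_idx ?mk_gface_idx ?mk_cast).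

Lemma mor_seq l m n (x : GaMor C l) (y : GaMor C m) (z : GaMor C n) i j : i <= l -> j <= m ->
  cast (GaMor C) (addnA l m n) (@cMor GM l (m + n) i x (@cMor GM m n j y z)) =
  @cMor GM (l + m) n (i + j) (@cMor GM l m i x y) z.
Proof.
case: x => sx fx; case: y => sy fy; case: z => sz fz /= hi hj.
have [ax <-] := surj sx; have [ay <-] := surj sy; have [az <-] := surj sz.
rewrite !socomp_gpi cast_pair cast_gpi; congr (_, _).
  congr gpi; apply: cast_mk.
  by rewrite !mk_gocomp_inord ?OC_seq //; lia.
apply: cast_mk.
mkify; rewrite !mk_gocomp_inord //; try lia.
rewrite OC_INV_in // !INVK OC_seq //; exact: ACT_INVle.
Qed.


Lemma ACT_INV_neq (a : T) i k : i <= lv a -> k <= lv a -> i != k -> ACT (INV a) i != ACT (INV a) k.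
Proof.
move=> h1 h2; apply: contra => /eqP e; apply/eqP.
by have := congr1 (ACT a) e; rewrite !ACT_INVr.
Qed.

Lemma mor_par l m n (x : GaMor C l) (y : GaMor C m) (z : GaMor C n) i k : i < k -> k <= l ->
  cast (GaMor C) (addnAC l m n) (@cMor GM (l + m) n (k + m) (@cMor GM l m i x y) z) =
  @cMor GM (l + n) m i (@cMor GM l n k x z) y.
Proof.
case: x => sx fx; case: y => sy fy; case: z => sz fz /= h1 h2.
have [ax <-] := surj sx; have [ay <-] := surj sy; have [az <-] := surj sz.
rewrite !socomp_gpi cast_pair cast_gpi; congr (_, _).
  congr gpi; apply: cast_mk.
  rewrite !mk_gocomp_inord ?lv_OC ?OC_par //; lia.
apply: cast_mk.
mkify; rewrite !mk_gocomp_inord //; try lia.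
have e1 : k + m = sh i (lv (mk ay)) k by rewrite /sh ltnNge ltnW.
have e2 : i = sh k (lv (mk az)) i by rewrite /sh h1.
have -> : ACT (INV (OC (mk ax) (mk ay) i)) (k + m) =
  sh (ACT (INV (mk ax)) i) m (ACT (INV (mk ax)) k).
  rewrite e1 OC_INV_out //=; lia.
have -> : ACT (INV (OC (mk ax) (mk az) k)) i =
  sh (ACT (INV (mk ax)) k) n (ACT (INV (mk ax)) i).
  rewrite {1}e2 OC_INV_out //=; lia.
have hik : ACT (INV (mk ax)) i != ACT (INV (mk ax)) k.
  apply: ACT_INV_neq => //=; lia.
have hi' := ACT_INVle (mk ax) i; have hk' := ACT_INVle (mk ax) k.
rewrite !INVK; rewrite /= in hi' hk'.
case: (ltngtP (ACT (INV (mk ax)) i) (ACT (INV (mk ax)) k)) => hc.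
- rewrite /sh ltnNge (ltnW hc) /= hc.
  by rewrite -(@OC_par (INV (mk fx)) (INV (mk fy)) (INV (mk fz)) _ _ hc hk').
- rewrite /sh hc ltnNge (ltnW hc) /=.
  by rewrite -(@OC_par (INV (mk fx)) (INV (mk fz)) (INV (mk fy)) _ _ hc hi').
- by rewrite hc eqxx in hik.
Qed.


Lemma ACT_INV_FC (A : T) j y : 0 < lv A -> j <= lv A -> y <= (lv A).-1 ->
  ACT (INV (FC j A)) y = ubmp (ACT (INV A) j) (ACT (INV A) (bmp j y)).
Proof.
move=> h0 hj hy; rewrite FC_INV // ACT_FC ?lv_INV //; last exact: ACT_INVle.
by rewrite INVK ACT_INVr.
Qed.

Lemma mk_gface n i (x : C n.+1) : mk (gface n i x) = FC i (mk x).
Proof. by []. Qed.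

Lemma mor_F1 l m (x : GaMor C l) (y : GaMor C m.+1) i j : i <= l -> j <= m.+1 ->
  @dMor GM (l + m) (i + j) (cast (GaMor C) (addnS l m) (@cMor GM l m.+1 i x y)) =
  @cMor GM l m i x (@dMor GM m j y).
Proof.
case: x => sx fx; case: y => sy fy /= hi hj.
have [ax <-] := surj sx; have [ay <-] := surj sy.
rewrite !socomp_gpi cast_pair cast_gpi /= !sface_gpi //; try lia.
rewrite socomp_gpi; congr (_, _).
  congr gpi; apply: mk_inj.
  rewrite mk_gface mk_cast !mk_gocomp_inord // OC_F1 //=.
apply: mk_inj; mkify; rewrite !mk_gocomp_inord //.
rewrite OC_INV_in // !INVK OC_F1 //; exact: ACT_INVle.
Qed.

Lemma mor_F2 l n (x : GaMor C l.+1) (z : GaMor C n) i k : i < k -> k <= l.+1 ->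
  @dMor GM (l + n) i (cast (GaMor C) (addSn l n) (@cMor GM l.+1 n k x z)) =
  @cMor GM l n k.-1 (@dMor GM l i x) z.
Proof.
case: x => sx fx; case: z => sz fz /= h1 h2.
have [ax <-] := surj sx; have [az <-] := surj sz.
rewrite !socomp_gpi cast_pair cast_gpi /= !sface_gpi //; try lia.
rewrite socomp_gpi; congr (_, _).
  congr gpi; apply: mk_inj.
  rewrite mk_gface mk_cast !mk_gocomp_inord //; try lia.
  by rewrite OC_F2.
apply: mk_inj; mkify; rewrite !mk_gocomp_inord //; try lia.
have e2 : i = sh k (lv (mk az)) i by rewrite /sh h1.
have -> : ACT (INV (OC (mk ax) (mk az) k)) i =
  sh (ACT (INV (mk ax)) k) n (ACT (INV (mk ax)) i).
  rewrite {1}e2 OC_INV_out //=; lia.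
rewrite mk_gface ACT_INV_FC; try (rewrite ?lv_mk; lia).
rewrite (_ : bmp i k.-1 = k); last by rewrite /bmp; case: ifP; lia.
have hik : ACT (INV (mk ax)) i != ACT (INV (mk ax)) k.
  apply: ACT_INV_neq => //=; lia.
have hi' := ACT_INVle (mk ax) i; have hk' := ACT_INVle (mk ax) k.
rewrite !INVK; rewrite /= in hi' hk'.
case: (ltngtP (ACT (INV (mk ax)) i) (ACT (INV (mk ax)) k)) => hc.
- rewrite /sh hc /ubmp hc.
  by rewrite (@OC_F2 (INV (mk fx)) (INV (mk fz)) _ _ hc hk').
- rewrite /sh ltnNge (ltnW hc) /= /ubmp ltnNge (ltnW hc) /=.
  by rewrite -(@OC_F3 (INV (mk fx)) (INV (mk fz)) _ _ hc hi').
- by rewrite hc eqxx in hik.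
Qed.

Lemma mor_F3 l m (x : GaMor C l.+1) (y : GaMor C m) i k : i < k -> k <= l.+1 ->
  @dMor GM (l + m) (k + m) (cast (GaMor C) (addSn l m) (@cMor GM l.+1 m i x y)) =
  @cMor GM l m i (@dMor GM l k x) y.
Proof.
case: x => sx fx; case: y => sy fy /= h1 h2.
have [ax <-] := surj sx; have [ay <-] := surj sy.
rewrite !socomp_gpi cast_pair cast_gpi /= !sface_gpi //; try lia.
rewrite socomp_gpi; congr (_, _).
  congr gpi; apply: mk_inj.
  rewrite mk_gface mk_cast !mk_gocomp_inord //; try lia.
  by rewrite (@OC_F3 (mk ax) (mk ay) k i h1 h2).
apply: mk_inj; mkify; rewrite !mk_gocomp_inord //; try lia.
have e1 : k + m = sh i (lv (mk ay)) k by rewrite /sh ltnNge ltnW.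
have -> : ACT (INV (OC (mk ax) (mk ay) i)) (k + m) =
  sh (ACT (INV (mk ax)) i) m (ACT (INV (mk ax)) k).
  rewrite e1 OC_INV_out //=; lia.
rewrite mk_gface ACT_INV_FC; try (rewrite ?lv_mk; lia).
rewrite (_ : bmp k i = i); last by rewrite /bmp; case: ifP; lia.
have hik : ACT (INV (mk ax)) i != ACT (INV (mk ax)) k.
  apply: ACT_INV_neq => //=; lia.
have hi' := ACT_INVle (mk ax) i; have hk' := ACT_INVle (mk ax) k.
rewrite !INVK; rewrite /= in hi' hk'.
case: (ltngtP (ACT (INV (mk ax)) i) (ACT (INV (mk ax)) k)) => hc.
- rewrite /sh ltnNge (ltnW hc) /= /ubmp ltnNge (ltnW hc) /=.
  by rewrite -(@OC_F3 (INV (mk fx)) (INV (mk fy)) _ _ hc hk').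
- rewrite /sh hc /ubmp hc.
  by rewrite (@OC_F2 (INV (mk fx)) (INV (mk fy)) _ _ hc hi').
- by rewrite hc eqxx in hik.
Qed.


Lemma idx_ord n (a : C n) x : (((gpi a)^-1)%g x) = gact (ginv n a) x.
Proof. by rewrite -gpi_inv gpiE. Qed.

Lemma gface_one n k : k <= n.+1 -> gface n k (gone C n.+1) = gone C n.
Proof. by move=> h; apply: mk_inj; rewrite mk_gface FC_ONE. Qed.

Lemma Gpd n : is_groupoid GM n.
Proof.
split; [|split; [|split; [|split]]].
- by move=> x /=; rewrite gpi_one invg1 /smul mul1g.
- case=> s f [s' g] /= e; split => //.
  by rewrite -e /smul gpi_mul /smul invgM mulgA.
- by case=> s f /=; rewrite mulg1r gmul1.
- by case=> s f [s' g] [s'' h] /= _ _; rewrite gmulA.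
- case=> s f; exists (smul s (gpi f)^-1%g, ginv n f) => /=.
  rewrite gmulV mulgVr; split => //; split => //.
  by rewrite /smul gpi_inv invgK mulgA mulgV mul1g.
Qed.

Lemma Dfun n i : i <= n.+1 -> is_functor (@dOb GM n i) (@dMor GM n i).
Proof.
move=> hi; split; [|split; [|split]].
- by [].
- case=> s f /=.
  have [a <-] := surj s.
  rewrite gpi_inv invgK -[((gpi f)^-1)%g]gpi_inv -!gpi_mul !sface_gpi // -gpi_mul.
  by rewrite gface_mulE // idx_ord.
- move=> s /=; rewrite ginv1 gface_one ?ginv1 //.
  by have := ltn_ord (((s^-1)%g (inord i))).
- case=> s f [s' g] /= e; congr (_, _).
  rewrite ginv_mul gface_mulE ?ginvK ?ginv_mul //; last by have := ltn_ord ((s^-1)%g (inord i)).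
  congr (gmul _ _ _); congr (ginv _ (gface _ _ _)).
  by rewrite -e /smul invgM invgK permM gpiE inord_val.
Qed.

Lemma ubmp_lt h k : h < k -> ubmp h k = k.-1.
Proof. by rewrite /ubmp => ->. Qed.
Lemma ubmp_ge h k : k <= h -> ubmp h k = k.
Proof. by rewrite /ubmp ltnNge => ->. Qed.

Lemma SSob : semisimplicial (@dOb GM).
Proof.
move=> n i j s h1 h2 /=.
have [a <-] := surj s.
have E : gface n i (gface n.+1 j a) = gface n j.-1 (gface n.+1 i a) by rewrite gface_face.
rewrite !sface_gpi; [by rewrite E | lia..].
Qed.

Lemma SSmor : semisimplicial (@dMor GM).
Proof.
move=> n i j [s f] h1 h2 /=.
have [a <-] := surj s.
have E : gface n i (gface n.+1 j a) = gface n j.-1 (gface n.+1 i a) by rewrite gface_face.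
rewrite !sface_gpi; [ | lia..].
congr (_, _); first by rewrite E.
apply: mk_inj; repeat rewrite ?mk_ginv ?mk_gface_idx ?mk_gface.
rewrite !ACT_INV_FC; try (rewrite ?lv_mk; lia).
rewrite (_ : bmp j i = i); last by rewrite /bmp; case: ifP; lia.
rewrite (_ : bmp i j.-1 = j); last by rewrite /bmp; case: ifP; lia.
have hij : ACT (INV (mk a)) i != ACT (INV (mk a)) j.
  apply: ACT_INV_neq => //=; lia.
have hi' := ACT_INVle (mk a) i; have hj' := ACT_INVle (mk a) j.
rewrite !INVK; rewrite /= in hi' hj'.
case: (ltngtP (ACT (INV (mk a)) i) (ACT (INV (mk a)) j)) => hc.
- rewrite (ubmp_ge (ltnW hc)) (ubmp_lt hc) FC_FC //; rewrite lv_INV lv_mk //.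
- rewrite (ubmp_ge (ltnW hc)) (ubmp_lt hc) [in RHS]FC_FC //; rewrite lv_INV lv_mk //.
- by rewrite hc eqxx in hij.
Qed.


Lemma OC_ONE n m k : k <= n -> OC (ONE n) (ONE m) k = ONE (n + m).
Proof.
move=> h; rewrite /OC BLK_ONE // DGit_ONE // MUL_ONEr // lv_ONE addnC //.
Qed.

Lemma Cfun n m i : i <= n -> is_bifunctor (@cOb GM n m i) (@cMor GM n m i).
Proof.
move=> hi; split; [|split; [|split]].
- by [].
- case=> s f [t g] /=.
  have [a <-] := surj s; have [b <-] := surj t.
  rewrite gpi_inv invgK -[((gpi f)^-1)%g]gpi_inv -[((gpi g)^-1)%g]gpi_inv.
  rewrite -!gpi_mul !socomp_gpi -gpi_mul; apply: (congr1 (@gpi C _)); apply: mk_inj.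
  rewrite -MUL_mk !mk_gocomp_inord // mk_gocomp_idx -!MUL_mk.
  by rewrite OC_IC.
- move=> s t /=; rewrite !ginv1; congr (_, _); apply: mk_inj.
  rewrite mk_ginv mk_gocomp.
  change (mk (gone C n)) with (ONE n); change (mk (gone C m)) with (ONE m).
  rewrite OC_ONE ?INV_ONE //; by rewrite -ltnS ltn_ord.
- case=> s f [s' f'] [t g] [t' g'] /= e1 e2; congr (_, _).
  apply: mk_inj; rewrite -MUL_mk !mk_ginv !mk_gocomp !ginv_mul -!MUL_mk.
  have hk : nat_of_ord ((s^-1)%g (inord i)) <= n by rewrite -ltnS ltn_ord.
  have hk' : nat_of_ord ((s'^-1)%g (inord i)) <= n by rewrite -ltnS ltn_ord.
  rewrite OC_IC // INV_MUL; last by rewrite !lv_OC //; exact: ACT_le.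
  congr (MUL (INV (OC _ _ _)) _).
  rewrite [mk (ginv n f)]mk_ginv INVK /ACT /= inord_val -e1 /smul invgM invgK permM gpiE //.
Qed.

Lemma mor_u1 n (v : GaMor C n) :
  @cMor GM 0 n 0 (@idm GM 0 (gpi (gone C 0))) v = v.
Proof.
case: v => s f /=; have [a <-] := surj s.
rewrite socomp_gpi; congr (_, _).
  by congr gpi; apply: mk_inj; rewrite mk_gocomp_inord // OC_unit_l.
apply: mk_inj; mkify.
rewrite (_ : ACT (INV (mk (gone C 0))) 0 = 0); last by rewrite /INV /= ginv1 ACT_ONE.
rewrite INV_ONE OC_unit_l INVK //.
Qed.

Lemma mor_u2 n (u : GaMor C n) i : i <= n ->
  cast (GaMor C) (addn0 n) (@cMor GM n 0 i u (@idm GM 0 (gpi (gone C 0)))) = u.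
Proof.
case: u => s f /= hi; have [a <-] := surj s.
rewrite socomp_gpi cast_pair cast_gpi; congr (_, _).
  by congr gpi; apply: cast_mk; rewrite mk_gocomp_inord // OC_unit_r.
apply: cast_mk; mkify.
rewrite INV_ONE OC_unit_r ?INVK //; exact: ACT_INVle.
Qed.


Lemma fst_cast a b (e : a = b) (p : GaMor C a) : (cast (GaMor C) e p).1 = cast Sn e p.1.
Proof. by case: b / e. Qed.

Lemma main : is_shifted_operad (Gamma C).
Proof.
split; first exact: Gpd.
split; first exact: Dfun.
split; first exact: SSob.
split; first exact: SSmor.
split; first exact: Cfun.
exists (gpi (gone C 0)); split.
  split; [|split; [|split; [|split; [|split; [|split]]]]].
  - by move=> n v; have := congr1 fst (mor_u1 (v, gone C n)).
  - by move=> n u i hi; have := congr1 fst (mor_u2 (u, gone C n) hi); rewrite fst_cast.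
  - move=> l m n x y z i j hi hj.
    by have := congr1 fst (mor_seq (x, gone C l) (y, gone C m) (z, gone C n) hi hj); rewrite fst_cast.
  - move=> l m n x y z i k hi hk.
    by have := congr1 fst (mor_par (x, gone C l) (y, gone C m) (z, gone C n) hi hk); rewrite fst_cast.
  - move=> l m x y i j hi hj.
    by have := congr1 fst (mor_F1 (x, gone C l) (y, gone C m.+1) hi hj); rewrite /= fst_cast.
  - move=> l n x z i k hi hk.
    by have := congr1 fst (mor_F2 (x, gone C l.+1) (z, gone C n) hi hk); rewrite /= fst_cast.
  - move=> l m x y i k hi hk.
    by have := congr1 fst (mor_F3 (x, gone C l.+1) (y, gone C m) hi hk); rewrite /= fst_cast.
split; [|split; [|split; [|split; [|split; [|split]]]]].
- exact: mor_u1.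
- exact: mor_u2.
- exact: mor_seq.
- exact: mor_par.
- exact: mor_F1.
- exact: mor_F2.
- exact: mor_F3.
Qed.

End Main.

Theorem theorem3p6 (C : CSG) :
  is_symmetric C -> is_ambi_contractible C -> is_monoidal C -> is_operadic C ->
  is_shifted_operad (Gamma C).
Proof. move=> HS HA HM HO; exact: (main HS HA HM HO). Qed.
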